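(* Let $M_{pq}=(W,V_{pq})$ be the inquisitive model with $W=\{w_1,w_2,w_3\}$, $V_{pq}(w_1)=\{p\}$, $V_{pq}(w_2)=\{q\}$, $V_{pq}(w_3)=\emptyset$, where $p,q$ are distinct propositional letters. Define the families of states $A=\{\{w_1,w_2\},\{w_1,w_3\}\}^{\downarrow}$, $B=\{\{w_1,w_2\},\{w_2,w_3\}\}^{\downarrow}$ and $C=\{\{w_1,w_2\},\{w_3\}\}^{\downarrow}$ (these are, in $M_{pq}$, the propositions of $?p\to?q$, $?q\to?p$ and $(?p\to?q)\land(?q\to?p)$ respectively). Let $\varphi(a,b)$ be a formula of $\textsf{INQ}^-$ in which $p,q$ do not occur, and let $\varphi(?p,?q)$ be the result of substituting $?p$ for $a$ and $?q$ for $b$. Then $[\varphi(?p,?q)]_{M_{pq}}\neq A$, $\neq B$ and $\neq C$.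
   Context: $\textsf{INQ}^-$ is the propositional language built from countably many propositional letters using $\bot,\top$, unary $\neg,?$ and binary $\land$, $\vee$ (inquisitive disjunction), $\otimes$ (tensor). A model is $M=(W,V)$ with $V$ assigning to each world a set of letters. Support at $s\subseteq W$: $s\models p$ iff $p\in V(w)$ for all $w\in s$; $s\models\bot$ iff $s=\emptyset$; $s\models\top$ always; $s\models\psi\land\chi$ iff both; $s\models\psi\vee\chi$ iff $s\models\psi$ or $s\models\chi$; $s\models\psi\otimes\chi$ iff $s=t_1\cup t_2$ for some $t_1\models\psi$, $t_2\models\chi$; $s\models\psi\to\chi$ iff for all $t\subseteq s$, $t\models\psi$ implies $t\models\chi$; $s\models\neg\psi$ iff $s\models\psi\to\bot$; $s\models?\psi$ iff $s\models\psi$ or $s\models\neg\psi$. $[\varphi]_M=\{s\subseteq W: s\models\varphi\}$. For a family $S$ of sets, $S^{\downarrow}=\{t: t\subseteq s \text{ for some } s\in S\}$. *)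

(* Defs.v *)
From mathcomp Require Import all_boot.
Set Implicit Arguments. Unset Strict Implicit. Unset Printing Implicit Defensive.

Inductive form : Type :=
  | Atom of nat
  | Bot
  | Top
  | Neg of form
  | Ques of form
  | And of form & form
  | Or of form & form
  | Tensor of form & form.

Section Support.
Variables (W : finType) (V : W -> nat -> bool).

Fixpoint supp (s : {set W}) (f : form) : bool :=
  match f with
  | Atom x => [forall w in s, V w x]
  | Bot => s == set0
  | Top => true
  | Neg g => [forall t : {set W}, (t \subset s) ==> (supp t g ==> (t == set0))]
  | Ques g => supp s g || [forall t : {set W}, (t \subset s) ==> (supp t g ==> (t == set0))]
  | And g h => supp s g && supp s h
  | Or g h => supp s g || supp s h
  | Tensor g h => [exists t1 : {set W}, exists t2 : {set W},
                     [&& s == t1 :|: t2, supp t1 g & supp t2 h]]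
  end.

Definition prop (f : form) : {set {set W}} := [set s | supp s f].
End Support.

Definition downset (W : finType) (S : {set {set W}}) : {set {set W}} :=
  [set t : {set W} | [exists s in S, t \subset s]].

Fixpoint occurs (x : nat) (f : form) : bool :=
  match f with
  | Atom y => y == x
  | Bot | Top => false
  | Neg g | Ques g => occurs x g
  | And g h | Or g h | Tensor g h => occurs x g || occurs x h
  end.

Fixpoint subst2 (a b : nat) (g h : form) (f : form) : form :=
  match f with
  | Atom y => if y == a then g else if y == b then h else Atom y
  | Bot => Bot
  | Top => Top
  | Neg f1 => Neg (subst2 a b g h f1)
  | Ques f1 => Ques (subst2 a b g h f1)
  | And f1 f2 => And (subst2 a b g h f1) (subst2 a b g h f2)
  | Or f1 f2 => Or (subst2 a b g h f1) (subst2 a b g h f2)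
  | Tensor f1 f2 => Tensor (subst2 a b g h f1) (subst2 a b g h f2)
  end.

Definition w1 : 'I_3 := @Ordinal 3 0 isT.
Definition w2 : 'I_3 := @Ordinal 3 1 isT.
Definition w3 : 'I_3 := @Ordinal 3 2 isT.

Definition Vpq (p q : nat) (w : 'I_3) (x : nat) : bool :=
  ((w == w1) && (x == p)) || ((w == w2) && (x == q)).

Definition famA : {set {set 'I_3}} := downset [set [set w1; w2]; [set w1; w3]].
Definition famB : {set {set 'I_3}} := downset [set [set w1; w2]; [set w2; w3]].
Definition famC : {set {set 'I_3}} := downset [set [set w1; w2]; [set w3]].

(* Main.v *)
Require Import Defs.
From mathcomp Require Import all_boot.
Set Implicit Arguments. Unset Strict Implicit. Unset Printing Implicit Defensive.

Section Ops.
Variable W : finType.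
Definition opNeg (X : {set {set W}}) : {set {set W}} :=
  [set s : {set W} | [forall t : {set W}, (t \subset s) ==> ((t \in X) ==> (t == set0))]].
Definition opQues (X : {set {set W}}) : {set {set W}} := X :|: opNeg X.
Definition opTen (X Y : {set {set W}}) : {set {set W}} :=
  [set s : {set W} | [exists t1 : {set W}, exists t2 : {set W},
      [&& s == t1 :|: t2, t1 \in X & t2 \in Y]]].

Variable V : W -> nat -> bool.

Lemma propNeg g : prop V (Neg g) = opNeg (prop V g).
Proof.
apply/setP => s; rewrite !inE /=; apply: eq_forallb => t; by rewrite inE.
Qed.
Lemma propQues g : prop V (Ques g) = opQues (prop V g).
Proof.
apply/setP => s; rewrite /opQues -propNeg !inE /=. done.
Qed.
Lemma propAnd g h : prop V (And g h) = prop V g :&: prop V h.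
Proof. by apply/setP => s; rewrite !inE. Qed.
Lemma propOr g h : prop V (Or g h) = prop V g :|: prop V h.
Proof. by apply/setP => s; rewrite !inE. Qed.
Lemma propTen g h : prop V (Tensor g h) = opTen (prop V g) (prop V h).
Proof.
apply/setP => s; rewrite !inE /=; apply: eq_existsb => t1;
apply: eq_existsb => t2; by rewrite !inE.
Qed.
Lemma propBot : prop V Bot = [set set0].
Proof. by apply/setP => s; rewrite !inE. Qed.
Lemma propTop : prop V Top = setT.
Proof. by apply/setP => s; rewrite !inE. Qed.
End Ops.

Definition mk (b1 b2 b3 : bool) : {set 'I_3} :=
  [set w | [|| (w == w1) && b1, (w == w2) && b2 | (w == w3) && b3]].

Lemma ord3 (w : 'I_3) : [\/ w = w1, w = w2 | w = w3].
Proof.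
case: w => [[|[|[|m]]] Hm].
- by apply: Or31; apply: val_inj.
- by apply: Or32; apply: val_inj.
- by apply: Or33; apply: val_inj.
- by [].
Qed.

Lemma mk_in1 a b c : (w1 \in mk a b c) = a.
Proof. by rewrite inE eqxx /= ?orbF. Qed.
Lemma mk_in2 a b c : (w2 \in mk a b c) = b.
Proof. by rewrite inE eqxx /= ?orbF. Qed.
Lemma mk_in3 a b c : (w3 \in mk a b c) = c.
Proof. by rewrite inE eqxx /= ?orbF. Qed.
Definition mk_in := (mk_in1, mk_in2, mk_in3).

Lemma mkE (s : {set 'I_3}) : s = mk (w1 \in s) (w2 \in s) (w3 \in s).
Proof. by apply/setP => w; case: (ord3 w) => ->; rewrite mk_in. Qed.

Lemma subset_mk a b c a' b' c' :
  (mk a b c \subset mk a' b' c') = [&& a ==> a', b ==> b' & c ==> c'].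
Proof.
apply/subsetP/idP => [H | H w].
- apply/and3P; split; apply/implyP.
  + by move=> ha; move: (H w1); rewrite !mk_in; apply.
  + by move=> ha; move: (H w2); rewrite !mk_in; apply.
  + by move=> ha; move: (H w3); rewrite !mk_in; apply.
- move/and3P: H => [/implyP h1 /implyP h2 /implyP h3].
  by case: (ord3 w) => ->; rewrite !mk_in.
Qed.

Lemma eq_mk a b c a' b' c' :
  (mk a b c == mk a' b' c') = [&& a == a', b == b' & c == c'].
Proof.
apply/eqP/and3P => [E | [/eqP-> /eqP-> /eqP->]] //.
split; apply/eqP.
- by move: (congr1 (fun s : {set 'I_3} => w1 \in s) E); rewrite !mk_in.
- by move: (congr1 (fun s : {set 'I_3} => w2 \in s) E); rewrite !mk_in.
- by move: (congr1 (fun s : {set 'I_3} => w3 \in s) E); rewrite !mk_in.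
Qed.

Lemma union_mk a b c a' b' c' :
  mk a b c :|: mk a' b' c' = mk (a || a') (b || b') (c || c').
Proof. by apply/setP => w; case: (ord3 w) => ->; rewrite in_setU !mk_in. Qed.

Lemma set0_mk : set0 = mk false false false.
Proof. by apply/setP => w; case: (ord3 w) => ->; rewrite in_set0 mk_in. Qed.

Definition allb (f : bool -> bool) := f false && f true.
Definition anyb (f : bool -> bool) := f false || f true.
Definition all8 (P : bool -> bool -> bool -> bool) :=
  allb (fun a => allb (fun b => allb (fun c => P a b c))).
Definition ex8 (P : bool -> bool -> bool -> bool) :=
  anyb (fun a => anyb (fun b => anyb (fun c => P a b c))).

Lemma allbP (f : bool -> bool) : reflect (forall b, f b) (allb f).
Proof.
apply: (iffP andP) => [[h1 h2] [] // | H]; by split; apply: H.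
Qed.
Lemma anybP (f : bool -> bool) : reflect (exists b, f b) (anyb f).
Proof.
apply: (iffP orP) => [[h|h] | [[] h]]; by [exists false | exists true | right | left].
Qed.
Lemma all8P (P : bool -> bool -> bool -> bool) : reflect (forall a b c, P a b c) (all8 P).
Proof.
apply: (iffP idP) => [H a b c | H].
- by move/allbP: H => /(_ a) /allbP /(_ b) /allbP /(_ c).
- by apply/allbP => a; apply/allbP => b; apply/allbP => c.
Qed.
Lemma ex8P (P : bool -> bool -> bool -> bool) : reflect (exists a b c, P a b c) (ex8 P).
Proof.
apply: (iffP idP) => [H | [a [b [c H]]]].
- move/anybP: H => [a /anybP [b /anybP [c H]]]; by exists a, b, c.
- by apply/anybP; exists a; apply/anybP; exists b; apply/anybP; exists c.
Qed.
Lemma eq_all8 (P Q : bool -> bool -> bool -> bool) : (forall a b c, P a b c = Q a b c) -> all8 P = all8 Q.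
Proof. by move=> H; rewrite /all8 /allb !H. Qed.
Lemma eq_ex8 (P Q : bool -> bool -> bool -> bool) : (forall a b c, P a b c = Q a b c) -> ex8 P = ex8 Q.
Proof. by move=> H; rewrite /ex8 /anyb !H. Qed.

Lemma forall_set (P : pred {set 'I_3}) :
  [forall t, P t] = all8 (fun a b c => P (mk a b c)).
Proof.
apply/forallP/all8P => H.
- by move=> a b c; apply: H.
- by move=> t; rewrite (mkE t); apply: H.
Qed.
Lemma exists_set (P : pred {set 'I_3}) :
  [exists t, P t] = ex8 (fun a b c => P (mk a b c)).
Proof.
apply/existsP/ex8P => [[t H] | [a [b [c H]]]].
- by move: H; rewrite (mkE t) => H; do 3 eexists; apply: H.
- by exists (mk a b c).
Qed.

Definition fn := bool -> bool -> bool -> bool.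
Definition fam (X : {set {set 'I_3}}) : fn := fun a b c => mk a b c \in X.

Definition cNeg (F : fn) : fn := fun a b c =>
  all8 (fun a' b' c' => [&& a' ==> a, b' ==> b & c' ==> c] ==>
     (F a' b' c' ==> [&& a' == false, b' == false & c' == false])).
Definition cQues (F : fn) : fn := fun a b c => F a b c || cNeg F a b c.
Definition cAnd (F G : fn) : fn := fun a b c => F a b c && G a b c.
Definition cOr (F G : fn) : fn := fun a b c => F a b c || G a b c.
Definition cTen (F G : fn) : fn := fun a b c =>
  ex8 (fun a1 b1 c1 => ex8 (fun a2 b2 c2 =>
    [&& [&& a == a1 || a2, b == b1 || b2 & c == c1 || c2], F a1 b1 c1 & G a2 b2 c2])).

Lemma fam_Neg X a b c : fam (opNeg X) a b c = cNeg (fam X) a b c.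
Proof.
rewrite /fam inE forall_set /cNeg; apply: eq_all8 => a' b' c'.
by rewrite subset_mk set0_mk eq_mk.
Qed.
Lemma fam_Ques X a b c : fam (opQues X) a b c = cQues (fam X) a b c.
Proof. by rewrite /cQues -fam_Neg /fam inE. Qed.
Lemma fam_And X Y a b c : fam (X :&: Y) a b c = cAnd (fam X) (fam Y) a b c.
Proof. by rewrite /fam inE. Qed.
Lemma fam_Or X Y a b c : fam (X :|: Y) a b c = cOr (fam X) (fam Y) a b c.
Proof. by rewrite /fam inE. Qed.
Lemma fam_Ten X Y a b c : fam (opTen X Y) a b c = cTen (fam X) (fam Y) a b c.
Proof.
rewrite /fam inE exists_set /cTen; apply: eq_ex8 => a1 b1 c1.
rewrite exists_set; apply: eq_ex8 => a2 b2 c2.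
by rewrite union_mk eq_mk.
Qed.

Definition feq (F G : fn) := forall a b c, F a b c = G a b c.

Lemma cNeg_ext F G : feq F G -> feq (cNeg F) (cNeg G).
Proof. by move=> H a b c; rewrite /cNeg; apply: eq_all8 => ???; rewrite H. Qed.
Lemma cQues_ext F G : feq F G -> feq (cQues F) (cQues G).
Proof. by move=> H a b c; rewrite /cQues H (cNeg_ext H). Qed.
Lemma cAnd_ext F G F' G' : feq F G -> feq F' G' -> feq (cAnd F F') (cAnd G G').
Proof. by move=> H H' a b c; rewrite /cAnd H H'. Qed.
Lemma cOr_ext F G F' G' : feq F G -> feq F' G' -> feq (cOr F F') (cOr G G').
Proof. by move=> H H' a b c; rewrite /cOr H H'. Qed.
Lemma cTen_ext F G F' G' : feq F G -> feq F' G' -> feq (cTen F F') (cTen G G').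
Proof.
move=> H H' a b c; rewrite /cTen; apply: eq_ex8 => ???; apply: eq_ex8 => ???.
by rewrite H H'.
Qed.

Definition eqF (F G : fn) := all8 (fun a b c => F a b c == G a b c).
Lemma eqFP F G : reflect (feq F G) (eqF F G).
Proof.
apply: (iffP (all8P _)) => H a b c; first by apply/eqP.
by rewrite H.
Qed.

Definition SSc : seq fn :=
  [:: (fun a b c => true);
      (fun a b c => ~~ [|| a, b | c]);
      (fun a b c => ~~ [&& a, b & c]);
      (fun a b c => ~~ (a && b));
      (fun a b c => ~~ (a && b) && ~~ (a && c));
      (fun a b c => ~~ [|| a && b, a && c | b && c]);
      (fun a b c => ~~ (a && b) && ~~ (b && c))].

Definition inS (F : fn) := has (eqF F) SSc.

Fixpoint In (G : fn) (s : seq fn) : Prop :=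
  if s is x :: s' then x = G \/ In G s' else False.

Lemma hasP' (p : pred fn) (s : seq fn) : reflect (exists2 G, In G s & p G) (has p s).
Proof.
elim: s => [|x s IH] /=; first by constructor => [[G []]].
apply: (iffP orP) => [[h | /IH [G HG h]] | [G [<-|HG] h]].
- by exists x; [left|].
- by exists G; [right|].
- by left.
- by right; apply/IH; exists G.
Qed.
Lemma allP' (p : pred fn) (s : seq fn) : all p s -> forall G, In G s -> p G.
Proof.
elim: s => [|x s IH] //= /andP [h1 h2] G [<-|HG] //; exact: IH.
Qed.

Lemma inSP (F : fn) : reflect (exists2 G, In G SSc & feq F G) (inS F).
Proof.
apply: (iffP (hasP' _ _)) => [[G HG /eqFP H] | [G HG H]]; exists G => //; exact/eqFP.
Qed.

Lemma inS_ext (F G : fn) : feq F G -> inS G -> inS F.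
Proof.
move=> H /inSP [K HK HGK]; apply/inSP; exists K => // a b c; by rewrite H HGK.
Qed.

Lemma SS_closed :
  all (fun X => inS (cNeg X) && inS (cQues X) &&
     all (fun Y => [&& inS (cAnd X Y), inS (cOr X Y) & inS (cTen X Y)]) SSc) SSc.
Proof. vm_compute. reflexivity. Qed.

Lemma closed1 (F : fn) : inS F -> inS (cNeg F) && inS (cQues F).
Proof.
move=> /inSP [G HG H].
have /andP [/andP [h1 h2] _] := allP' SS_closed HG.
by rewrite (inS_ext (cNeg_ext H) h1) (inS_ext (cQues_ext H) h2).
Qed.
Lemma closed2 (F F' : fn) : inS F -> inS F' ->
  [&& inS (cAnd F F'), inS (cOr F F') & inS (cTen F F')].
Proof.
move=> /inSP [G HG H] /inSP [G' HG' H'].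
have /andP [_ hall] := allP' SS_closed HG.
have /and3P [h1 h2 h3] := allP' hall HG'.
by rewrite (inS_ext (cAnd_ext H H') h1) (inS_ext (cOr_ext H H') h2)
  (inS_ext (cTen_ext H H') h3).
Qed.

Lemma fam_Atom p q x a b c :
  fam (prop (Vpq p q) (Atom x)) a b c = [&& a ==> (x == p), b ==> (x == q) & ~~ c].
Proof.
rewrite /fam inE /=.
apply/forallP/and3P => [H | [/implyP h1 /implyP h2 /negP h3] w].
- split.
  + by apply/implyP => ha; move: (H w1); rewrite mk_in ha /Vpq /= ?orbF.
  + by apply/implyP => hb; move: (H w2); rewrite mk_in hb /Vpq /= ?orbF.
  + by apply/negP => hc; move: (H w3); rewrite mk_in hc /Vpq.
- apply/implyP; case: (ord3 w) => -> ; rewrite mk_in /Vpq /= ?orbF //.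
  all: try by move/h1.
  all: try by move/h2.
  all: by move/h3.
Qed.

Lemma feq_trans (F G K : fn) : feq F G -> feq G K -> feq F K.
Proof. by move=> H1 H2 a b c; rewrite H1 H2. Qed.

Lemma conc_facts :
  [&& inS (cQues (fun a b c => ~~ b && ~~ c)),
      inS (cQues (fun a b c => ~~ a && ~~ c)) &
      inS (fun a b c => [&& ~~ a, ~~ b & ~~ c])].
Proof. vm_compute. reflexivity. Qed.

Lemma main p q a b phi : p <> q -> ~~ occurs p phi -> ~~ occurs q phi ->
  inS (fam (prop (Vpq p q) (subst2 a b (Ques (Atom p)) (Ques (Atom q)) phi))).
Proof.
move=> pq; have /and3P [hp hq h0] := conc_facts.
elim: phi => [y|||g IH|g IH|g IHg k IHh|g IHg k IHh|g IHg k IHh] /=.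
- move=> ny nq.
  case: (y == a); last case: (y == b).
  + rewrite propQues; apply: inS_ext hp.
    apply: feq_trans (fun a b c => fam_Ques _ a b c) _; apply: cQues_ext.
    move=> a' b' c'; rewrite fam_Atom eqxx (introF eqP pq).
    by case: a'; case: b'; case: c'.
  + rewrite propQues; apply: inS_ext hq.
    apply: feq_trans (fun a b c => fam_Ques _ a b c) _; apply: cQues_ext.
    have qp : q <> p by move=> e; apply: pq.
    move=> a' b' c'; rewrite fam_Atom eqxx (introF eqP qp).
    by case: a'; case: b'; case: c'.
  + apply: inS_ext h0 => a' b' c'; rewrite fam_Atom.
    by rewrite (negbTE ny) (negbTE nq); case: a'; case: b'; case: c'.
- move=> _ _; rewrite propBot; apply: inS_ext h0 => a' b' c'.
  rewrite /fam inE set0_mk eq_mk.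
  by case: a'; case: b'; case: c'.
- move=> _ _; rewrite propTop; apply: inS_ext (_ : inS (fun _ _ _ => true)).
    by move=> a' b' c'; rewrite /fam inE.
  by vm_compute.
- move=> np nq; rewrite propNeg.
  have /andP [h _] := closed1 (IH np nq).
  by apply: inS_ext h => a' b' c'; rewrite fam_Neg.
- move=> np nq; rewrite propQues.
  have /andP [_ h] := closed1 (IH np nq).
  by apply: inS_ext h => a' b' c'; rewrite fam_Ques.
- rewrite !negb_or => /andP [np1 np2] /andP [nq1 nq2]; rewrite propAnd.
  have /and3P [h _ _] := closed2 (IHg np1 nq1) (IHh np2 nq2).
  by apply: inS_ext h => a' b' c'; rewrite fam_And.
- rewrite !negb_or => /andP [np1 np2] /andP [nq1 nq2]; rewrite propOr.
  have /and3P [_ h _] := closed2 (IHg np1 nq1) (IHh np2 nq2).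
  by apply: inS_ext h => a' b' c'; rewrite fam_Or.
- rewrite !negb_or => /andP [np1 np2] /andP [nq1 nq2]; rewrite propTen.
  have /and3P [_ _ h] := closed2 (IHg np1 nq1) (IHh np2 nq2).
  by apply: inS_ext h => a' b' c'; rewrite fam_Ten.
Qed.

Lemma SS_sep : all (fun G : fn => G true true false ==> G false true true && G true false true) SSc.
Proof. vm_compute. reflexivity. Qed.

Lemma sep (X : {set {set 'I_3}}) : inS (fam X) ->
  mk true true false \in X -> (mk false true true \in X) && (mk true false true \in X).
Proof.
move=> /inSP [G HG H] h; have := allP' SS_sep HG.
by rewrite -!H /fam h.
Qed.

Lemma in12 (S : {set {set 'I_3}}) : [set w1; w2] \in S -> mk true true false \in downset S.
Proof.
move=> hS; rewrite inE; apply/existsP; exists [set w1; w2]; rewrite hS /=.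
by rewrite (mkE [set w1; w2]) subset_mk !inE.
Qed.

Lemma famA_n : mk false true true \notin famA.
Proof.
rewrite inE; apply/negP => /existsP [s]; rewrite !inE => /andP [/orP [] /eqP -> ].
- by rewrite (mkE [set w1; w2]) subset_mk !inE.
- by rewrite (mkE [set w1; w3]) subset_mk !inE.
Qed.
Lemma famB_n : mk true false true \notin famB.
Proof.
rewrite inE; apply/negP => /existsP [s]; rewrite !inE => /andP [/orP [] /eqP -> ].
- by rewrite (mkE [set w1; w2]) subset_mk !inE.
- by rewrite (mkE [set w2; w3]) subset_mk !inE.
Qed.
Lemma famC_n : mk true false true \notin famC.
Proof.
rewrite inE; apply/negP => /existsP [s]; rewrite !inE => /andP [/orP [] /eqP -> ].
- by rewrite (mkE [set w1; w2]) subset_mk !inE.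
- by rewrite (mkE [set w3]) subset_mk !inE.
Qed.

Theorem lemma2 (p q a b : nat) (phi : form) :
  p <> q -> a <> b -> ~~ occurs p phi -> ~~ occurs q phi ->
  let X := prop (Vpq p q) (subst2 a b (Ques (Atom p)) (Ques (Atom q)) phi) in
  [/\ X <> famA, X <> famB & X <> famC].
Proof.
move=> pq _ np nq X.
have hX : inS (fam X) := main a b pq np nq.
split => E; rewrite E in hX.
- have := sep hX (in12 (setU11 _ _)).
  by rewrite (negbTE famA_n).
- have := sep hX (in12 (setU11 _ _)).
  by rewrite (negbTE famB_n) andbF.
- have := sep hX (in12 (setU11 _ _)).
  by rewrite (negbTE famC_n) andbF.
Qed.
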